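(* Let $n\ge 2$, $F$ the free group on $g_1,\dots,g_n$, $F^{(1)}=[F,F]$, $F^{(2)}=[F^{(1)},F^{(1)}]$, $\Lambda_n=\mathbb{Z}[t_1,t_1^{-1},\dots,t_n,t_n^{-1}]$, and let $\mu_1:F\to \mathrm{SL}(2,\Lambda_n)$ be the group homomorphism with $\mu_1(g_i)=\begin{bmatrix} t_i&0\\ 1&t_i^{-1}\end{bmatrix}$ for $1\le i\le n$. Let $w\in F^{(1)}\setminus F^{(2)}$. Then there exists a nonzero Laurent polynomial $\mathcal{L}_w\in\Lambda_n$ such that $$\mu_1(w)=\begin{bmatrix} 1&0\\ \mathcal{L}_w&1\end{bmatrix}.$$ *)

(* Defs.v *)
From HB Require Import structures.
From mathcomp Require Import all_boot all_order all_algebra.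
From mathcomp Require Import fraction.
From mathcomp Require Import mpoly.

Set Implicit Arguments.
Unset Strict Implicit.
Unset Printing Implicit Defensive.

Import GRing.Theory.
Local Open Scope ring_scope.

(* The free group F on g_1, ..., g_n, as reduced words.                *)
(* A letter (i, false) stands for g_i, (i, true) for g_i^{-1}.          *)
Definition letter (n : nat) := ('I_n * bool)%type.

Definition linv n (x : letter n) : letter n := (x.1, ~~ x.2).

Definition reduced n (w : seq (letter n)) : bool :=
  sorted (fun x y => y != linv x) w.

Definition reduce n (w : seq (letter n)) : seq (letter n) :=
  foldr (fun x s => if s is y :: s' then (if y == linv x then s' else x :: s)
                    else [:: x]) [::] w.

Definition fmul n (u v : seq (letter n)) := reduce (u ++ v).
Definition finv n (u : seq (letter n)) := rev (map (@linv n) u).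
Definition fcomm n (u v : seq (letter n)) :=
  fmul (fmul (finv u) (finv v)) (fmul u v).

Inductive fgen n (S : seq (letter n) -> Prop) : seq (letter n) -> Prop :=
| fgen_base w : S w -> fgen S w
| fgen_one : fgen S [::]
| fgen_mul u v : fgen S u -> fgen S v -> fgen S (fmul u v)
| fgen_inv u : fgen S u -> fgen S (finv u).

Definition fderived n (H : seq (letter n) -> Prop) : seq (letter n) -> Prop :=
  fgen (fun w => exists u v, H u /\ H v /\ w = fcomm u v).

Definition Fgrp n : seq (letter n) -> Prop := fun w => reduced w.
Definition F1 n := fderived (@Fgrp n).
Definition F2 n := fderived (@F1 n).

(* Lambda_n = Z[t_1^{+-1}, ..., t_n^{+-1}], realized inside the field  *)
(* of fractions of Z[t_1, ..., t_n] as the ring of fractions p / m     *)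
(* with m a power of t_1 ... t_n.                                      *)
Definition Frac n := {fraction {mpoly int[n]}}.

Definition tofr n (p : {mpoly int[n]}) : Frac n := @FracField.tofrac _ p.

Definition tvar n (i : 'I_n) : Frac n := tofr 'X_i.

Definition laurent n (L : Frac n) : Prop :=
  exists (p : {mpoly int[n]}) (k : nat),
    L * (\prod_(i < n) tvar i) ^+ k = tofr p.

Definition mu1_gen n (i : 'I_n) : 'M[Frac n]_2 :=
  \matrix_(a < 2, b < 2)
    (if (a == 0) && (b == 0) then tvar i
     else if (a == 1) && (b == 0) then 1
     else if (a == 0) && (b == 1) then 0
     else (tvar i)^-1).

Definition mu1_letter n (x : letter n) : 'M[Frac n]_2 :=
  if x.2 then invmx (mu1_gen x.1) else mu1_gen x.1.

Definition mu1 n (w : seq (letter n)) : 'M[Frac n]_2 :=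
  foldr (fun x M => mu1_letter x *m M) 1%:M w.

Definition lower_unip n (L : Frac n) : 'M[Frac n]_2 :=
  \matrix_(a < 2, b < 2) (if a == b then 1 else if (a == 1) && (b == 0) then L else 0).

(* Main.v *)
Require Import Defs.
From mathcomp Require Import all_boot all_order all_algebra.
From mathcomp Require Import fraction.
From mathcomp Require Import mpoly.
From mathcomp Require Import ring zify.
From Stdlib Require Import Setoid Morphisms.
Set Implicit Arguments.
Unset Strict Implicit.
Unset Printing Implicit Defensive.

Notation finv := Defs.finv.
Notation reduce := Defs.reduce.
Notation reduced := Defs.reduced.
Notation linv := Defs.linv.
Notation fmul := Defs.fmul.
Notation fcomm := Defs.fcomm.

Import GRing.Theory Num.Theory.


Section Words.
Variable n : nat.
Notation L := (letter n).
Implicit Types (x y : L) (u v w s t : seq L).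

Definition step x s : seq L :=
  if s is y :: s' then (if y == linv x then s' else x :: s) else [:: x].

Lemma reduceE w : reduce w = foldr step [::] w.
Proof. by []. Qed.

Lemma linvK : involutive (@linv n).
Proof. by case=> i b; rewrite /linv /= negbK. Qed.

Lemma linv_inj : injective (@linv n).
Proof. exact: inv_inj linvK. Qed.

Lemma reduced_cons x s :
  reduced (x :: s) = (if s is y :: _ then y != linv x else true) && reduced s.
Proof. by case: s => [|y s] //=. Qed.

Lemma reduced_step x s : reduced s -> reduced (step x s).
Proof.
case: s => [|y s] // Hs; rewrite [step _ _]/=; case: ifP => [_|Hy].
  by move: Hs; rewrite reduced_cons => /andP[].
by rewrite reduced_cons Hy.
Qed.

Lemma reduced_foldr s u : reduced s -> reduced (foldr step s u).
Proof. by move=> Hs; elim: u => //= x u IH; apply: reduced_step. Qed.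

Lemma reduced_reduce w : reduced (reduce w).
Proof. exact: reduced_foldr. Qed.

Lemma step_step x t : reduced t -> step x (step (linv x) t) = t.
Proof.
case: t => [|y t]; first by rewrite /= eqxx.
rewrite [step _ (_ :: _)]/= linvK; case: eqP => [->|Hy] Ht.
  move: Ht; rewrite reduced_cons; case: t => [|z t] //= /andP[Hz _].
  by rewrite (negbTE Hz).
by rewrite /= eqxx.
Qed.

Lemma step_foldr x s r : reduced s ->
  step x (foldr step s r) = foldr step s (step x r).
Proof.
move=> Hs; case: r => [|y r] //=; case: ifP => //= /eqP ->.
by rewrite step_step // reduced_foldr.
Qed.

Lemma foldr_reduce s u : reduced s -> foldr step s u = foldr step s (reduce u).
Proof.
move=> Hs; elim: u => //= x u IH.
by rewrite IH step_foldr.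
Qed.

Lemma reduce_id w : reduced w -> reduce w = w.
Proof.
elim: w => // x w IH; rewrite reduced_cons => /andP[H1 H2].
rewrite reduceE /= -reduceE IH //.
by case: w H1 {IH H2} => [|y w] //= /negbTE ->.
Qed.

Lemma reduce_cat u v : reduce (u ++ v) = foldr step (reduce v) u.
Proof. by rewrite /reduce foldr_cat. Qed.

Lemma reduce_catl u v : reduce (reduce u ++ v) = reduce (u ++ v).
Proof. by rewrite !reduce_cat [RHS]foldr_reduce // reduced_reduce. Qed.

Lemma reduce_catr u v : reduce (u ++ reduce v) = reduce (u ++ v).
Proof. by rewrite !reduce_cat reduce_id // reduced_reduce. Qed.

Lemma reduce_reduce u : reduce (reduce u) = reduce u.
Proof. by rewrite reduce_id // reduced_reduce. Qed.

Lemma reduce_mid u v w : reduce (u ++ reduce v ++ w) = reduce (u ++ v ++ w).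
Proof. by rewrite -reduce_catr reduce_catl reduce_catr. Qed.

Lemma finv_cons x u : finv (x :: u) = finv u ++ [:: linv x].
Proof. by rewrite /finv /= rev_cons cats1. Qed.

Lemma finv_cat u v : finv (u ++ v) = finv v ++ finv u.
Proof. by rewrite /finv map_cat rev_cat. Qed.

Lemma finvK : involutive (@finv n).
Proof. by move=> u; rewrite /finv map_rev revK -map_comp (eq_map linvK) map_id. Qed.

Lemma finv_nil : finv [::] = [::] :> seq L.
Proof. by []. Qed.

Lemma reduce_cancel u : reduce (u ++ finv u) = [::].
Proof.
elim: u => //= x u IH.
rewrite -/(reduce _) finv_cons catA -reduce_catl IH /=.
by rewrite eqxx.
Qed.

Lemma reduce_cancel' u : reduce (finv u ++ u) = [::].
Proof. by rewrite -{2}(finvK u) reduce_cancel. Qed.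

Lemma reduce_cancel_mid a u c : reduce (a ++ u ++ finv u ++ c) = reduce (a ++ c).
Proof. by rewrite [u ++ _]catA -reduce_mid reduce_cancel. Qed.

Lemma reduce_cancel_mid' a u c : reduce (a ++ finv u ++ u ++ c) = reduce (a ++ c).
Proof. by rewrite [finv u ++ _]catA -reduce_mid reduce_cancel'. Qed.

Lemma reduced_finv u : reduced u -> reduced (finv u).
Proof.
rewrite /reduced /finv rev_sorted sorted_map.
apply: sub_sorted => x y /=.
by apply: contra => /eqP ->; rewrite linvK.
Qed.

Lemma reduce_finv u : reduce (finv u) = finv (reduce u).
Proof.
have H0 : reduce (u ++ finv (reduce u)) = [::].
  by rewrite -reduce_catl reduce_cancel.
rewrite -[finv u]cats0 -H0 reduce_catr.
have := reduce_cancel_mid' [::] u (finv (reduce u)); rewrite /= => ->.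
by rewrite reduce_id //; apply/reduced_finv/reduced_reduce.
Qed.

End Words.


Section Sub.
Variable n : nat.

Notation L := (letter n).
Implicit Types (x y : L) (u v w s t z : seq L).

Definition Q (S : seq L -> Prop) w := fgen S (reduce w).

Lemma Q_congr S u v : reduce u = reduce v -> Q S u -> Q S v.
Proof. by rewrite /Q => ->. Qed.

Lemma Q_nil S : Q S [::].
Proof. exact: fgen_one. Qed.

Lemma Q_cat S u v : Q S u -> Q S v -> Q S (u ++ v).
Proof.
move=> Hu Hv; have := fgen_mul Hu Hv.
by rewrite /fmul reduce_catl reduce_catr.
Qed.

Lemma Q_finv S u : Q S u -> Q S (finv u).
Proof. by move=> Hu; rewrite /Q reduce_finv; apply: fgen_inv. Qed.

Lemma Q_reduced S w : reduced w -> Q S w = fgen S w.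
Proof. by move=> Hw; rewrite /Q reduce_id. Qed.

Lemma Q_conj S :
  (forall w z, S w -> Q S (z ++ w ++ finv z)) ->
  forall w z, Q S w -> Q S (z ++ w ++ finv z).
Proof.
move=> HS w z Hw.
apply: (@Q_congr _ (z ++ reduce w ++ finv z)); first by rewrite reduce_mid.
rewrite /Q in Hw *; move: (reduce w) Hw z => r Hr.
elim: Hr => [w' Sw||u v _ IHu _ IHv|u _ IH] z; rewrite -/(Q S _).
- exact: HS.
- apply: (@Q_congr S [::]); last exact: Q_nil. by rewrite /= reduce_cancel.
- apply: Q_congr (Q_cat (IHu z) (IHv z)).
  rewrite /fmul reduce_mid.
  by rewrite -!catA [z ++ (u ++ _)]catA reduce_cancel_mid' -catA.
- have := Q_finv (IH z); apply: Q_congr.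
  by rewrite !finv_cat finvK catA.
Qed.

Definition commw u v := finv u ++ finv v ++ u ++ v.

Lemma reduce_commw u v : reduce (commw u v) = fcomm (reduce u) (reduce v).
Proof.
rewrite /fcomm /fmul reduce_catl reduce_catr -catA -!reduce_finv.
rewrite reduce_catl reduce_mid [finv u ++ _]catA reduce_mid catA reduce_catr.
by rewrite /commw !catA.
Qed.

Definition req u v := reduce u = reduce v.

Lemma req_red u v : req u v -> reduce u = reduce v.
Proof. by []. Qed.

Lemma req_equiv : Equivalence req.
Proof. by split; rewrite /req => // x y z -> . Qed.

Lemma req_cat u u' v v' : req u u' -> req v v' -> req (u ++ v) (u' ++ v').
Proof.
rewrite /req => H1 H2.
by rewrite -reduce_catl H1 reduce_catl -reduce_catr H2 reduce_catr.
Qed.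

Lemma req_can u c : req (finv u ++ u ++ c) c.
Proof. by have := reduce_cancel_mid' [::] u c. Qed.

Lemma req_can' u c : req (u ++ finv u ++ c) c.
Proof. by have := reduce_cancel_mid [::] u c. Qed.

End Sub.

Add Parametric Relation n : (seq (letter n)) (@req n)
  reflexivity proved by (@Equivalence_Reflexive _ _ (@req_equiv n))
  symmetry proved by (@Equivalence_Symmetric _ _ (@req_equiv n))
  transitivity proved by (@Equivalence_Transitive _ _ (@req_equiv n))
  as req_rel.

Add Parametric Morphism n : (@cat (letter n))
  with signature (@req n) ==> (@req n) ==> (@req n) as cat_mor.
Proof. by move=> *; apply: req_cat. Qed.


Section Sub2.
Variable n : nat.
Notation L := (letter n).
Implicit Types (x y : L) (u v w s t z : seq L).

Lemma commw_conj a b z :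
  reduce (z ++ commw a b ++ finv z) =
  reduce (commw (z ++ a ++ finv z) (z ++ b ++ finv z)).
Proof.
rewrite /commw !finv_cat !finvK -!catA.
apply: req_red; by rewrite !req_can.
Qed.

Lemma Q_swap S (B : seq L -> Prop) :
  (forall w z, S w -> Q S (z ++ w ++ finv z)) ->
  (forall a b, B a -> B b -> Q S (commw a b)) ->
  (forall a, B a -> B (finv a)) ->
  forall u v z1 z2, B u -> B v ->
  Q S (z1 ++ u ++ v ++ z2) -> Q S (z1 ++ v ++ u ++ z2).
Proof.
move=> HS Hc Hi u v z1 z2 Bu Bv H.
have H1 : Q S (z1 ++ commw (finv v) (finv u) ++ finv z1).
  by apply: Q_conj => //; apply: Hc; apply: Hi.
apply: Q_congr (Q_cat H1 H).
rewrite /commw !finvK -!catA.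
apply: req_red; by rewrite !req_can.
Qed.

End Sub2.

Add Parametric Morphism n (x : letter n) : (cons x)
  with signature (@req n) ==> (@req n) as cons_mor.
Proof. by move=> u v H; apply: (@req_cat n [:: x] [:: x] u v). Qed.


Local Open Scope ring_scope.

Section Comb.
Variable n : nat.
Notation L := (letter n).
Implicit Types (x y : L) (u v w s t z : seq L).

Definition S1 : seq L -> Prop := fun w => exists u v, Fgrp u /\ Fgrp v /\ w = fcomm u v.
Definition S2 : seq L -> Prop := fun w => exists u v, F1 u /\ F1 v /\ w = fcomm u v.
Definition P1 w := Q S1 w.
Definition P2 w := Q S2 w.

Lemma fgen_reduced (S : seq L -> Prop) w :
  (forall w, S w -> reduced w) -> fgen S w -> reduced w.
Proof.
move=> HS; elim => //; first by move=> u v _ _ _ _; apply: reduced_reduce.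
by move=> u _; apply: reduced_finv.
Qed.

Lemma reduced_fcomm u v : reduced (fcomm u v).
Proof. exact: reduced_reduce. Qed.

Lemma F1_reduced w : F1 w -> reduced w.
Proof. by apply: fgen_reduced => ? [u [v [_ [_ ->]]]]; apply: reduced_fcomm. Qed.

Lemma F1_P1 w : F1 w -> P1 w.
Proof. by move=> H; rewrite /P1 Q_reduced //; apply: F1_reduced. Qed.

Lemma P1_F1 w : P1 w -> F1 (reduce w).
Proof. by []. Qed.

Lemma P1_commw a b : P1 (commw a b).
Proof.
rewrite /P1 /Q reduce_commw; apply: fgen_base.
by exists (reduce a), (reduce b); split; [|split]; rewrite // /Fgrp reduced_reduce.
Qed.

Lemma P2_commw a b : P1 a -> P1 b -> P2 (commw a b).
Proof.
move=> Ha Hb; rewrite /P2 /Q reduce_commw; apply: fgen_base.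
by exists (reduce a), (reduce b).
Qed.

Lemma S1_conj w z : S1 w -> Q S1 (z ++ w ++ finv z).
Proof.
move=> [u [v [Hu [Hv ->]]]].
apply: (@Q_congr _ _ (commw (z ++ u ++ finv z) (z ++ v ++ finv z))); last exact: P1_commw.
have -> : fcomm u v = reduce (commw u v) by rewrite reduce_commw !reduce_id.
by rewrite -commw_conj reduce_mid.
Qed.

Lemma P1_conj w z : P1 w -> P1 (z ++ w ++ finv z).
Proof. by apply: Q_conj; apply: S1_conj. Qed.

Lemma S2_conj w z : S2 w -> Q S2 (z ++ w ++ finv z).
Proof.
move=> [u [v [Hu [Hv ->]]]].
apply: (@Q_congr _ _ (commw (z ++ u ++ finv z) (z ++ v ++ finv z))).
  have -> : fcomm u v = reduce (commw u v).
    by rewrite reduce_commw !reduce_id //; apply: F1_reduced.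
  by rewrite -commw_conj reduce_mid.
by apply: P2_commw; apply: P1_conj; apply: F1_P1.
Qed.

Lemma P1_swap u v z1 z2 : P1 (z1 ++ u ++ v ++ z2) -> P1 (z1 ++ v ++ u ++ z2).
Proof.
apply: (@Q_swap _ _ (fun _ => True)) => //.
- exact: S1_conj.
- by move=> *; apply: P1_commw.
Qed.

Lemma P2_swap u v z1 z2 : P1 u -> P1 v ->
  P2 (z1 ++ u ++ v ++ z2) -> P2 (z1 ++ v ++ u ++ z2).
Proof.
apply: (@Q_swap _ _ P1).
- exact: S2_conj.
- exact: P2_commw.
- exact: Q_finv.
Qed.

End Comb.

Section Generic.
Variable n : nat.
Notation L := (letter n).
Variables (K : eqType) (Qp B : seq L -> Prop) (X : K -> seq L).
Hypothesis hreq : forall u v, req u v -> Qp u -> Qp v.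
Hypothesis hnil : Qp [::].
Hypothesis hswap : forall u v z1 z2, B u -> B v ->
  Qp (z1 ++ u ++ v ++ z2) -> Qp (z1 ++ v ++ u ++ z2).
Hypothesis hBnil : B [::].
Hypothesis hBcat : forall u v, B u -> B v -> B (u ++ v).
Hypothesis hBinv : forall u, B u -> B (finv u).
Hypothesis hX : forall k, B (X k).

Definition xw (ks : K * bool) := if ks.2 then finv (X ks.1) else X ks.1.
Definition flat (s : seq (K * bool)) := flatten (map xw s).
Definition sgnb (b : bool) : int := if b then -1 else 1.
Definition cnt k (s : seq (K * bool)) : int := \sum_(ks <- s | ks.1 == k) sgnb ks.2.

Lemma flat_cat s1 s2 : flat (s1 ++ s2) = flat s1 ++ flat s2.
Proof. by rewrite /flat map_cat flatten_cat. Qed.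

Lemma flat_cons ks s : flat (ks :: s) = xw ks ++ flat s.
Proof. by []. Qed.

Lemma B_xw ks : B (xw ks).
Proof. by rewrite /xw; case: ifP => _; [apply: hBinv|]. Qed.

Lemma B_flat s : B (flat s).
Proof. by elim: s => //= ks s IH; apply: hBcat => //; apply: B_xw. Qed.

Lemma cnt_cons k ks s : cnt k (ks :: s) = (if ks.1 == k then sgnb ks.2 else 0) + cnt k s.
Proof. by rewrite /cnt big_cons; case: ifP => //; rewrite add0r. Qed.

Lemma cnt_cat k s1 s2 : cnt k (s1 ++ s2) = cnt k s1 + cnt k s2.
Proof. by rewrite /cnt big_cat. Qed.

Lemma cnt_one_sign k b s : (k, ~~ b) \notin s -> cnt k ((k, b) :: s) != 0.
Proof.
move=> Hn; rewrite cnt_cons eqxx /=.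
have H : forall ks, ks \in s -> ks.1 == k -> ks.2 = b.
  move=> [k' b'] Hin /= /eqP Ek; subst k'.
  by case: b b' Hn Hin => [] [] // /negP.
case: b Hn H => Hn H.
- have : cnt k s <= 0.
    rewrite /cnt big_seq_cond; apply: sumr_le0 => ks /andP[Hin Hk].
    by rewrite (H ks Hin Hk).
  by rewrite /sgnb; case: (cnt k s) => [m|m] //; case: m.
- have : 0 <= cnt k s.
    rewrite /cnt big_seq_cond; apply: sumr_ge0 => ks /andP[Hin Hk].
    by rewrite (H ks Hin Hk).
  by rewrite /sgnb; case: (cnt k s) => [m|m].
Qed.

Lemma flat_cancel s : (forall k, cnt k s = 0) -> Qp (flat s).
Proof.
move: {2}(size s) (leqnn (size s)) => m; elim: m s => [|m IH] [|[k b] s] //= Hm Hc.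
have Hin : (k, ~~ b) \in s.
  by apply/negPn/negP => /cnt_one_sign; rewrite Hc eqxx.
case/splitPr: Hin Hc Hm => A C Hc Hm.
rewrite flat_cons flat_cat flat_cons.
apply: hswap; [exact: B_xw| exact: B_flat|].
apply: (@hreq (flat (A ++ C))).
  rewrite flat_cat /xw /=; case: (b) => /=; apply: req_red.
    by rewrite req_can.
  by rewrite req_can'.
apply: IH; first by move: Hm; rewrite !size_cat /= addnS ltnS => /ltnW.
move=> j; move: (Hc j); rewrite !cnt_cons cnt_cat cnt_cons cnt_cat /=.
case: (k == j) => /=; last by rewrite !add0r.
by case: (b) => /= <-; rewrite /sgnb /=; ring.
Qed.

End Generic.


Local Open Scope ring_scope.

Section Pos.
Variable n : nat.
Notation L := (letter n).
Notation P := {ffun 'I_n -> int}.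
Implicit Types (x y : L) (u v w s t z : seq L) (p q : P).

Definition dl x : P := [ffun j => if x.1 == j then sgnb x.2 else 0].
Definition pos w : P := \sum_(x <- w) dl x.
Definition ek (i : 'I_n) : P := dl (i, false).

Lemma dl_linv x : dl (linv x) = - dl x.
Proof.
by apply/ffunP => j; rewrite !ffunE /=; case: ifP => //; case: x.2; rewrite /sgnb /= ?opprK // oppr0.
Qed.

Lemma dl_true i : dl (i, true) = - ek i.
Proof. exact: (dl_linv (i, false)). Qed.

Lemma pos_nil : pos [::] = 0.
Proof. by rewrite /pos big_nil. Qed.

Lemma pos_cons x w : pos (x :: w) = dl x + pos w.
Proof. by rewrite /pos big_cons. Qed.

Lemma pos_cat u v : pos (u ++ v) = pos u + pos v.
Proof. by rewrite /pos big_cat. Qed.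

Lemma pos_finv u : pos (finv u) = - pos u.
Proof.
rewrite /pos /finv big_rev big_map -sumrN.
by apply: eq_bigr => x _; rewrite dl_linv.
Qed.

Lemma pos_step x s : pos (step x s) = dl x + pos s.
Proof.
case: s => [|y s] /=; first by rewrite pos_cons.
case: eqP => [->|_]; last by rewrite pos_cons.
by rewrite pos_cons dl_linv addrA subrr add0r.
Qed.

Lemma pos_reduce w : pos (reduce w) = pos w.
Proof.
elim: w => [|x w IH] //.
by rewrite reduceE /= -reduceE pos_step IH pos_cons.
Qed.

Lemma pos_fcomm u v : pos (fcomm u v) = 0.
Proof.
rewrite /fcomm /fmul !pos_reduce !pos_cat !pos_reduce !pos_cat !pos_finv.
by rewrite addrA addrAC subrK addNr.
Qed.

Lemma F1_pos w : F1 w -> pos w = 0.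
Proof.
elim => [w' [u [v [_ [_ ->]]]]| |u v _ Hu _ Hv|u _ Hu].
- exact: pos_fcomm.
- exact: pos_nil.
- by rewrite /fmul pos_reduce pos_cat Hu Hv addr0.
- by rewrite pos_finv Hu oppr0.
Qed.

Lemma cnt_pos w i : cnt i w = pos w i.
Proof.
rewrite /cnt /pos sum_ffunE big_mkcond /=.
by apply: eq_bigr => x _; rewrite ffunE eq_sym.
Qed.

Lemma closed_P1 w : pos w = 0 -> P1 w.
Proof.
move=> H0.
have Ef : flat (fun i : 'I_n => [:: (i, false)]) w = w.
  elim: w {H0} => //= [[i b]] w IH.
  by rewrite flat_cons IH /xw /=; case: b.
rewrite -Ef; apply: (@flat_cancel n 'I_n (@P1 n) (fun _ => True)) => //.
- by move=> u v; rewrite /req => E; apply: Q_congr.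
- exact: Q_nil.
- by move=> *; apply: P1_swap.
- by move=> k; rewrite cnt_pos H0 ffunE.
Qed.

End Pos.

Section Edges.
Variable n : nat.
Notation L := (letter n).
Notation P := {ffun 'I_n -> int}.
Implicit Types (x y : L) (u v w s t z : seq L) (p q : P).

Definition gamma p : seq L :=
  flatten [seq nseq `|p i|%N (i, p i < 0) | i <- enum 'I_n].

Lemma pos_nseq m x : pos (nseq m x) = dl x *+ m.
Proof. by elim: m => [|m IH]; rewrite ?pos_nil // /= pos_cons IH mulrS. Qed.

Lemma pos_flatten (ss : seq (seq L)) : pos (flatten ss) = \sum_(s <- ss) pos s.
Proof.
elim: ss => [|s ss IH]; first by rewrite big_nil pos_nil.
by rewrite /= pos_cat IH big_cons.
Qed.

Lemma pos_gamma p : pos (gamma p) = p.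
Proof.
rewrite /gamma pos_flatten big_map big_enum /=.
apply/ffunP => j; rewrite sum_ffunE (bigD1 j) //= big1 ?addr0.
  rewrite pos_nseq ffunMnE ffunE /= eqxx /sgnb.
  by case: (p j) => m /=; rewrite ?mulNrn ?NegzE natz.
move=> i Hij; rewrite pos_nseq ffunMnE ffunE /= (negbTE Hij).
by rewrite mul0rn.
Qed.

Lemma gamma0 : gamma 0 = [::].
Proof.
rewrite /gamma; elim: (enum 'I_n) => //= i s ->.
by rewrite ffunE.
Qed.

Definition Xk (k : P * 'I_n) : seq L :=
  gamma k.1 ++ [:: (k.2, false)] ++ finv (gamma (k.1 + ek k.2)).

Lemma pos_Xk k : pos (Xk k) = 0.
Proof.
rewrite /Xk !pos_cat pos_finv !pos_gamma pos_cons pos_nil addr0.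
by rewrite addrA subrr.
Qed.

Fixpoint edges w p : seq ((P * 'I_n) * bool) :=
  if w is x :: w' then
    (if x.2 then ((p - ek x.1, x.1), true) else ((p, x.1), false))
      :: edges w' (p + dl x)
  else [::].

Lemma edges_tele w p :
  req (flat Xk (edges w p)) (gamma p ++ w ++ finv (gamma (p + pos w))).
Proof.
elim: w p => [|[i b] w IH] p /=.
  by rewrite pos_nil addr0 /req reduce_cancel.
rewrite flat_cons IH pos_cons addrA.
case: b => /=; rewrite /xw /Xk /=.
- rewrite !finv_cat finv_cons finvK subrK dl_true -!catA.
  by rewrite req_can.
- by rewrite -!catA cat_cons -/(ek i) req_can.
Qed.

End Edges.

Lemma zero_cnt_F2 n (w : seq (letter n)) : reduced w -> pos w = 0 ->
  (forall k, cnt k (edges w 0) = 0) -> F2 w.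
Proof.
move=> Hr H0 Hc.
have H : P2 (flat (@Xk n) (edges w 0)).
  apply: (@flat_cancel n _ (@P2 n) (@P1 n)) => //.
  - by move=> u v E; apply: Q_congr.
  - exact: Q_nil.
  - by move=> *; apply: P2_swap.
  - exact: Q_nil.
  - by move=> *; apply: Q_cat.
  - by move=> *; apply: Q_finv.
  - by move=> k; apply: closed_P1; apply: pos_Xk.
have E := edges_tele w 0.
rewrite H0 addr0 gamma0 /= cats0 in E.
have := Q_congr E H.
by rewrite /P2 Q_reduced.
Qed.


Local Open Scope ring_scope.

Section Mon.
Variable n : nat.
Notation P := {ffun 'I_n -> int}.
Notation F := (Frac n).
Implicit Types (p q : P).

Lemma tvar_neq0 (i : 'I_n) : tvar i != 0.
Proof.
rewrite /tvar /tofr tofrac_eq0; apply/eqP => H.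
have := @mcoeffX n int U_(i)%MM U_(i)%MM.
by rewrite H mcoeff0 eqxx.
Qed.

Lemma tvar_unit (i : 'I_n) : tvar i \is a GRing.unit.
Proof. by rewrite unitfE tvar_neq0. Qed.

Definition mon p : F := \prod_(i < n) tvar i ^ p i.

Lemma monD p q : mon (p + q) = mon p * mon q.
Proof.
rewrite /mon -big_split /=; apply: eq_bigr => i _.
by rewrite ffunE exprzDr // tvar_unit.
Qed.

Lemma mon0 : mon (0 : P) = 1.
Proof. by rewrite /mon big1 // => i _; rewrite ffunE expr0z. Qed.

Lemma mon_neq0 p : mon p != 0.
Proof.
rewrite /mon; apply/prodf_neq0 => i _.
by rewrite expfz_neq0 // tvar_neq0.
Qed.

Lemma monN p : mon (- p) = (mon p)^-1.
Proof.
have H : mon p * mon (- p) = 1 by rewrite -monD subrr mon0.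
have Hp := mon_neq0 p.
by rewrite -[mon (- p)]mul1r -(mulVf Hp) -mulrA H mulr1.
Qed.

Lemma monB p q : mon (p - q) = mon p / mon q.
Proof. by rewrite monD monN. Qed.

Lemma mon2 p : mon (p *+ 2) = mon p ^+ 2.
Proof. by rewrite mulr2n monD expr2. Qed.

Lemma mon_ek i : mon (ek i) = tvar i.
Proof.
rewrite /mon (bigD1 i) //= big1 ?mulr1.
  by rewrite ffunE /= eqxx /sgnb /= expr1z.
by move=> j Hj; rewrite ffunE /= eq_sym (negbTE Hj) expr0z.
Qed.

End Mon.

Section Mat.
Variable n : nat.
Notation P := {ffun 'I_n -> int}.
Notation F := (Frac n).

Definition mat2 (a b c d : F) : 'M[F]_2 :=
  \matrix_(i < 2, j < 2) (if i == 0 then (if j == 0 then a else b)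
                          else (if j == 0 then c else d)).

Lemma mat2P (M : 'M[F]_2) a b c d :
  M 0 0 = a -> M 0 1 = b -> M 1 0 = c -> M 1 1 = d -> M = mat2 a b c d.
Proof.
move=> Ha Hb Hc Hd; apply/matrixP => i j; rewrite mxE.
case: i => [[|[|//]] Hi]; case: j => [[|[|//]] Hj] /=;
  [rewrite -Ha | rewrite -Hb | rewrite -Hc | rewrite -Hd]; congr (M _ _); apply: val_inj => //.
Qed.

Lemma E01 : (0 == 1 :> 'I_2) = false. Proof. by []. Qed.
Lemma E10 : (1 == 0 :> 'I_2) = false. Proof. by []. Qed.

Lemma mat2E a b c d : (mat2 a b c d 0 0 = a) * (mat2 a b c d 0 1 = b) *
   (mat2 a b c d 1 0 = c) * (mat2 a b c d 1 1 = d).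
Proof. by rewrite !mxE. Qed.

Lemma mat2_mul a b c d a' b' c' d' :
  mat2 a b c d *m mat2 a' b' c' d' =
  mat2 (a * a' + b * c') (a * b' + b * d') (c * a' + d * c') (c * b' + d * d').
Proof.
have E1 : lift ord0 ord0 = 1 :> 'I_2 by apply: val_inj.
apply: mat2P; rewrite mxE big_ord_recl big_ord1 E1 !mat2E //.
Qed.

Lemma mat2_1 : 1%:M = mat2 1 0 0 1.
Proof. by apply: mat2P; rewrite mxE. Qed.

Lemma mu1_gen_mat (i : 'I_n) : mu1_gen i = mat2 (tvar i) 0 1 (tvar i)^-1.
Proof. by apply: mat2P; rewrite mxE !eqxx ?E01 ?E10. Qed.

Lemma mu1_gen_inv (i : 'I_n) : invmx (mu1_gen i) = mat2 (tvar i)^-1 0 (-1) (tvar i).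
Proof.
have Hi := tvar_neq0 i.
have H : mu1_gen i *m mat2 (tvar i)^-1 0 (-1) (tvar i) = 1%:M.
  rewrite mu1_gen_mat mat2_mul mat2_1.
  by rewrite !mulr0 !mul0r !addr0 !add0r mulfV // mulVf // mul1r mulrN1 subrr.
have [U _] := mulmx1_unit H.
by rewrite -[RHS]mul1mx -(mulVmx U) -mulmxA H mulmx1.
Qed.

Lemma lower_unip_mat (L : F) : lower_unip L = mat2 1 0 L 1.
Proof. by apply: mat2P; rewrite mxE ?eqxx ?E01 ?E10. Qed.

End Mat.

Lemma alg_false (R : fieldType) (A M T S : R) : T != 0 -> M != 0 -> A != 0 ->
  (T * A + 0 * (A * (M * T) ^+ 2 * S) = T * A) /\
  (T * 0 + 0 * A^-1 = 0) /\
  (1 * A + T^-1 * (A * (M * T) ^+ 2 * S) = T * A * M ^+ 2 * ((M ^+ 2)^-1 / T + S)) /\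
  (1 * 0 + T^-1 * A^-1 = (T * A)^-1).
Proof.
by move=> HT HM HA; split; [|split; [|split]]; field; rewrite ?HT ?HM ?HA.
Qed.

Lemma alg_true (R : fieldType) (A M T S : R) : T != 0 -> M != 0 -> A != 0 ->
  (T^-1 * A + 0 * (A * (M / T) ^+ 2 * S) = T^-1 * A) /\
  (T^-1 * 0 + 0 * A^-1 = 0) /\
  (-1 * A + T * (A * (M / T) ^+ 2 * S) =
     T^-1 * A * M ^+ 2 * (-1 * (((M / T) ^+ 2)^-1 / T) + S)) /\
  (-1 * 0 + T * A^-1 = (T^-1 * A)^-1).
Proof.
by move=> HT HM HA; split; [|split; [|split]]; field; rewrite ?HT ?HM ?HA.
Qed.

Section Formula.
Variable n : nat.
Notation P := {ffun 'I_n -> int}.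
Notation F := (Frac n).

Definition kexp (k : P * 'I_n) : P := - (k.1 *+ 2) - ek k.2.
Definition Sum (w : seq (letter n)) (p : P) : F :=
  \sum_(e <- edges w p) (sgnb e.2)%:~R * mon (kexp e.1).

Lemma mu1_formula w p :
  mu1 w = mat2 (mon (pos w)) 0 (mon (pos w) * mon (p *+ 2) * Sum w p) (mon (pos w))^-1.
Proof.
elim: w p => [|[i b] w IH] p.
  rewrite pos_nil mon0 /Sum big_nil mulr0 invr1; exact: mat2_1.
have -> : mu1 ((i, b) :: w) = mu1_letter (i, b) *m mu1 w by [].
rewrite (IH (p + dl (i, b))) /Sum big_cons -/(Sum _ _) pos_cons /mu1_letter /=.
have HT := tvar_neq0 i.
have HM := mon_neq0 p.
have HA := mon_neq0 (pos w).
case: b => /=.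
- rewrite mu1_gen_inv mat2_mul dl_true /kexp /= !mon2 ?monB ?monD ?monN ?mon2 ?monB ?mon_ek.
  rewrite /sgnb /= mulrN1z.
  have [h1 [h2 [h3 h4]]] := alg_true (Sum w (p - ek i)) HT HM HA.
  by rewrite h1 h2 h3 h4.
- rewrite mu1_gen_mat mat2_mul /kexp /= -/(ek i) !mon2 ?monB ?monD ?monN ?mon2 ?monD ?mon_ek.
  rewrite /sgnb /= mulr1z.
  have [h1 [h2 [h3 h4]]] := alg_false (Sum w (p + ek i)) HT HM HA.
  by rewrite h1 h2 h3 h4 mul1r.
Qed.

End Formula.

Local Open Scope ring_scope.

Section Indep.
Variable n : nat.
Notation P := {ffun 'I_n -> int}.
Notation F := (Frac n).
Variables (K : eqType) (f : K -> P).
Hypothesis f_inj : injective f.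
Variable s : seq (K * bool).

Definition Sig : F := \sum_(e <- s) (sgnb e.2)%:~R * mon (f e.1).
Definition Nb : nat := \sum_(e <- s) \sum_(i < n) `|f e.1 i|%N.
Definition cN : P := [ffun _ => Nb%:Z].
Definition mm (v : P) : 'X_{1..n} := [multinom `|v i|%N | i < n].
Definition pol : {mpoly int[n]} := \sum_(e <- s) (sgnb e.2)%:~R * 'X_[mm (f e.1 + cN)].

Lemma Nb_bound e i : e \in s -> (`|f e.1 i| <= Nb)%N.
Proof.
move=> He; rewrite /Nb (big_rem e) //= (bigD1 i) //= -addnA.
exact: leq_addr.
Qed.

Lemma nonneg e i : e \in s -> 0 <= (f e.1 + cN) i.
Proof.
move=> He; have := Nb_bound i He; rewrite !ffunE.
move: (f e.1 i) => z; lia.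
Qed.

Lemma mon_pos (v : P) : (forall i, 0 <= v i) -> mon v = tofr 'X_[mm v].
Proof.
move=> Hv; rewrite /mon /tofr mpolyXE_id rmorph_prod; apply: eq_bigr => i _.
rewrite rmorphXn mnmE -[v i](gez0_abs (Hv i)).
by [].
Qed.

Lemma mon_cN : mon cN = (\prod_(i < n) tvar i) ^+ Nb.
Proof. by rewrite /mon -prodrXl; apply: eq_bigr => i _; rewrite ffunE. Qed.

Lemma Sig_pol : Sig * (\prod_(i < n) tvar i) ^+ Nb = tofr pol.
Proof.
rewrite -mon_cN /Sig /pol mulr_suml /tofr rmorph_sum big_seq [RHS]big_seq.
apply: eq_bigr => e He; rewrite rmorphM rmorph_int -mulrA -monD.
by rewrite mon_pos // => i; apply: nonneg.
Qed.

Lemma mm_inj (v v' : P) : (forall i, 0 <= v i) -> (forall i, 0 <= v' i) -> mm v = mm v' -> v = v'.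
Proof.
move=> Hv Hv' E; apply/ffunP => i.
have : (mm v) i = (mm v') i by rewrite E.
by rewrite !mnmE -{2}[v i](gez0_abs (Hv i)) -[v' i](gez0_abs (Hv' i)) => ->.
Qed.

Lemma Sig0_cnt : Sig = 0 -> forall k, cnt k s = 0.
Proof.
move=> H0 k.
have [He|Hn] := boolP (has (fun e : K * bool => e.1 == k) s); last first.
  rewrite /cnt big_seq_cond big1 // => e /andP[Hin Hk].
  by move/hasPn: Hn => /(_ e Hin); rewrite Hk.
case/hasP: He => e0 He0 /eqP Hk.
have Hp : pol = 0.
  by apply/eqP; rewrite -tofrac_eq0 -/(tofr _) -Sig_pol H0 mul0r.
have := congr1 (mcoeff (mm (f k + cN))) Hp.
rewrite mcoeff0 raddf_sum /= => <-.
rewrite /cnt big_mkcond /= big_seq [RHS]big_seq.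
apply: eq_bigr => e He; rewrite mulrzl raddfMz [X in X *~ _]/= mcoeffX.
have -> : (mm (f e.1 + cN) == mm (f k + cN)) = (e.1 == k).
  apply/eqP/eqP => [E|->] //.
  apply: f_inj; apply/(addIr cN); apply: mm_inj E => i; first exact: nonneg.
  by rewrite -Hk; apply: nonneg.
by case: (e.1 == k); rewrite ?mul0rz //; case: (e.2).
Qed.

End Indep.

Local Open Scope ring_scope.

Lemma kexp_inj n : injective (@kexp n).
Proof.
move=> [q i] [q' i'] /ffunP E.
have Ej : forall j, q j + q j + (i == j)%:Z = q' j + q' j + (i' == j)%:Z.
  move=> j; have := E j; rewrite /kexp /= !ffunE /=.
  case: (i == j); case: (i' == j) => /=; lia.
have Hi : i = i'.
  apply/eqP/negPn/negP => Hne; have := Ej i; rewrite eqxx eq_sym (negbTE Hne) /=.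
  lia.
subst i'; congr pair; apply/ffunP => j; move: (Ej j); case: (i == j) => /=; lia.
Qed.

Theorem lemma5p1 (n : nat) (hn : (2 <= n)%N) (w : seq (letter n)) :
  reduced w -> F1 w -> ~ F2 w ->
  exists L : Frac n, laurent L /\ L != 0 /\ mu1 w = lower_unip L.
Proof.
move=> Hr H1 H2.
have H0 := F1_pos H1.
exists (Sum w 0); split; [|split].
- exists (pol (@kexp n) (edges w 0)), (Nb (@kexp n) (edges w 0)).
  exact: Sig_pol.
- apply/eqP => HS; apply: H2; apply: zero_cnt_F2 => //.
  exact: (Sig0_cnt (@kexp_inj n) HS).
- rewrite (mu1_formula w 0) H0 mul0rn mon0 !mul1r invr1 lower_unip_mat.
  by [].
Qed.
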